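(* Let $m\in\mathbb Z_{\ge0}$, $c\in\mathbb C$, and $D^c_{m+1}=z^2\frac{d}{dz}\left(\frac{1-z}{z}\right)\left(z\frac{d}{dz}+c-1\right)^m$. Then $D^c_{m+1}=\sum_{k=0}^{m+1}a^c_{m+1,k}(z)\frac{d^k}{dz^k}$ where each $a^c_{m+1,k}(z)\in\mathbb C[z]$ has the factorization $a^c_{m+1,k}(z)=(\alpha_{m+1,k}(c)z+\beta_{m+1,k}(c))z^k$ (so has degree at most $k+1$) with $\alpha_{m+1,k}(c),\beta_{m+1,k}(c)\in\mathbb Z[c]$, and the top coefficient is $a^c_{m+1,m+1}(z)=(1-z)z^{m+1}$, independent of $c$. *)

(* Defs.v *)
From HB Require Import structures.
From mathcomp Require Import all_boot all_order all_algebra.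
Set Implicit Arguments. Unset Strict Implicit. Unset Printing Implicit Defensive.
Import Order.TTheory GRing.Theory Num.Theory.
Local Open Scope ring_scope.

(* Differential operators with polynomial coefficients are represented by
   their action on C[z] (= {poly C}); in characteristic 0 such an operator is
   determined by this action. *)

Definition theta_c {C : fieldType} (c : C) (g : {poly C}) : {poly C} :=
  'X * g^`() + (c - 1)%:P * g.

(* The operator  z^2 d/dz ((1-z)/z) .  Applied to a polynomial h, the function
   ((1-z)/z) h = q/z with q = (1-z)h is rational; by the quotient rule
   z^2 (q/z)' = z q' - q, which is again a polynomial. *)
Definition z2d_mul {C : fieldType} (h : {poly C}) : {poly C} :=
  let q := (1 - 'X) * h in 'X * q^`() - q.

Definition Dop {C : fieldType} (c : C) (m : nat) (f : {poly C}) : {poly C} :=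
  z2d_mul (iter m (theta_c c) f).

Definition evalZ {C : fieldType} (p : {poly int}) (c : C) : C :=
  (map_poly intr p).[c].

(* Main.v *)
Require Import Defs.
From HB Require Import structures.
From mathcomp Require Import all_boot all_order all_algebra.
From mathcomp Require Import ring.
Import Order.TTheory GRing.Theory Num.Theory.
Local Open Scope ring_scope.

Section Aux.
Variable C : fieldType.
Variable f : {poly C}.

Definition S (u : nat -> C) (n : nat) : {poly C} :=
  \sum_(k < n) ((u k)%:P * 'X^k) * f^`(k).

Definition sh {T : nzRingType} (u : nat -> T) (k : nat) : T :=
  if k is k'.+1 then u k' else 0.

Lemma S_eq u v n : (forall k, (k < n)%N -> u k = v k) -> S u n = S v n.
Proof. by move=> H; apply: eq_bigr => i _; rewrite H. Qed.

Lemma S_ext u n : u n = 0 -> S u n.+1 = S u n.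
Proof. by move=> H; rewrite /S big_ord_recr /= H mul0r mul0r addr0. Qed.

Lemma S_add u v n : S u n + S v n = S (fun k => u k + v k) n.
Proof.
rewrite /S -big_split /=; apply: eq_bigr => i _.
by rewrite polyCD !mulrDl.
Qed.

Lemma S_opp u n : - S u n = S (fun k => - u k) n.
Proof.
rewrite /S -sumrN; apply: eq_bigr => i _.
by rewrite polyCN !mulNr.
Qed.

Lemma S_scale (a : C) u n : a%:P * S u n = S (fun k => a * u k) n.
Proof.
rewrite /S mulr_sumr; apply: eq_bigr => i _.
by rewrite polyCM !mulrA.
Qed.

Lemma S_shift u n : S (sh u) n.+1 = 'X * \sum_(k < n) ((u k)%:P * 'X^k) * f^`(k.+1).
Proof.
rewrite /S big_ord_recl /= mul0r mul0r add0r mulr_sumr.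
apply: eq_bigr => i _; rewrite /bump /= exprS; ring.
Qed.

Lemma dS u n : 'X * (S u n)^`() = S (fun k => k%:R * u k) n + S (sh u) n.+1.
Proof.
rewrite S_shift /S raddf_sum mulr_sumr mulr_sumr -big_split /=.
apply: eq_bigr => i _.
rewrite derivM derivE derivXn -derivnS -mulr_natr polyCM rmorph_nat.
case: (nat_of_ord i) => [|k]; first by rewrite !mulr0 !mul0r !add0r.
rewrite /= exprS; ring.
Qed.

End Aux.
Arguments S {C}.

Fixpoint e (m k : nat) : {poly int} :=
  match m with
  | 0 => (k == 0%N)%:R
  | m'.+1 => (k%:R + 'X - 1) * e m' k + sh (e m') k
  end.

Lemma e_gt m k : (m < k)%N -> e m k = 0.
Proof.
elim: m k => [|m IH] k H /=; first by case: k H.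
rewrite IH ?(ltn_trans _ H) // mulr0 add0r.
by case: k H => [|k] //= H; rewrite IH.
Qed.

Lemma e_mm m : e m m = 1.
Proof. by elim: m => [|m IH] //=; rewrite e_gt // mulr0 add0r. Qed.

Section Ev.
Variable C : fieldType.
Variable c : C.

Lemma evalZ_D p q : evalZ (p + q) c = evalZ p c + evalZ q c.
Proof. by rewrite /evalZ rmorphD hornerD. Qed.
Lemma evalZ_B p q : evalZ (p - q) c = evalZ p c - evalZ q c.
Proof. by rewrite /evalZ rmorphB hornerD hornerN. Qed.
Lemma evalZ_N p : evalZ (- p) c = - evalZ p c.
Proof. by rewrite /evalZ rmorphN hornerN. Qed.
Lemma evalZ_M p q : evalZ (p * q) c = evalZ p c * evalZ q c.
Proof. by rewrite /evalZ rmorphM hornerM. Qed.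
Lemma evalZ_X : evalZ 'X c = c.
Proof. by rewrite /evalZ map_polyX hornerX. Qed.
Lemma evalZ_nat n : evalZ n%:R c = n%:R.
Proof. by rewrite /evalZ rmorph_nat -polyC_natr hornerC. Qed.
Lemma evalZ_sh g k : evalZ (sh g k) c = sh (fun j => evalZ (g j) c) k.
Proof. by case: k => [|k] //=; rewrite /evalZ rmorph0 horner0. Qed.

Lemma evalZ_e m k : evalZ (e m.+1 k) c =
  (k%:R + c - 1) * evalZ (e m k) c + sh (fun j => evalZ (e m j) c) k.
Proof.
by rewrite /= evalZ_D evalZ_M evalZ_B evalZ_D evalZ_X evalZ_nat
 evalZ_sh /evalZ rmorph1 hornerC.
Qed.
End Ev.

Lemma theta_S (C : fieldType) (c : C) (f : {poly C}) (u : nat -> C) (n : nat) : u n = 0 ->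
  theta_c c (S f u n) = S f (fun k => (k%:R + c - 1) * u k + sh u k) n.+1.
Proof.
move=> H; rewrite /theta_c dS S_scale -(@S_ext _ _ (fun k => k%:R * u k) _);
  last by rewrite H mulr0.
rewrite -(@S_ext _ _ (fun k => (c - 1) * u k) _); last by rewrite H mulr0.
rewrite -addrA addrC -addrA S_add S_add; apply: S_eq => k _; ring.
Qed.

Lemma iter_S (C : fieldType) (c : C) (f : {poly C}) m :
  iter m (theta_c c) f = S f (fun k => evalZ (e m k) c) m.+1.
Proof.
elim: m => [|m IH].
  by rewrite /S big_ord1 /= /evalZ rmorph1 hornerC expr0 !mul1r.
rewrite iterS IH theta_S; last by rewrite e_gt // /evalZ rmorph0 horner0.
by apply: S_eq => k _; rewrite evalZ_e.
Qed.

Lemma z2d_mulE (C : fieldType) (h : {poly C}) :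
  z2d_mul h = (1 - 'X) * ('X * h^`()) - h.
Proof. rewrite /z2d_mul derivM derivB derivX derivC; ring. Qed.

Lemma T_eq (C : fieldType) (f : {poly C}) (a b : nat -> C) n :
  \sum_(k < n) (((a k)%:P * 'X + (b k)%:P) * 'X^k) * f^`(k)
  = 'X * S f a n + S f b n.
Proof.
rewrite /S mulr_sumr -big_split /=; apply: eq_bigr => i _; ring.
Qed.

Theorem lemma8p2 (m : nat) :
  exists alpha beta : nat -> {poly int},
    [/\ alpha m.+1 = -1, beta m.+1 = 1 &
     forall (C : numClosedFieldType) (c : C) (f : {poly C}),
       Dop c m f =
       \sum_(k < m.+2)
          (((evalZ (alpha k) c)%:P * 'X + (evalZ (beta k) c)%:P) * 'X^k)
            * f^`(k)].
Proof.
exists (fun k => - (k%:R * e m k + sh (e m) k)).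
exists (fun k => k%:R * e m k + sh (e m) k - e m k).
split.
- by rewrite /= e_gt // e_mm mulr0 add0r.
- by rewrite /= e_gt // e_mm mulr0 add0r subr0.
move=> C c f.
rewrite (@T_eq _ f (fun k => evalZ (- (k%:R * e m k + sh (e m) k)) c)
  (fun k => evalZ (k%:R * e m k + sh (e m) k - e m k) c)) /Dop z2d_mulE iter_S dS.
set ev := fun k => evalZ (e m k) c.
rewrite -(@S_ext _ _ (fun k => k%:R * ev k) _); last by rewrite /ev e_gt // /evalZ rmorph0 horner0 mulr0.
rewrite -(@S_ext _ _ ev m.+1); last by rewrite /ev e_gt // /evalZ rmorph0 horner0.
rewrite S_add.
set P := S f _ m.+2.
have -> : S f (fun k => evalZ (- (k%:R * e m k + sh (e m) k)) c) m.+2 = - P.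
  rewrite S_opp; apply: S_eq => k _.
  by rewrite evalZ_N evalZ_D evalZ_M evalZ_nat evalZ_sh.
have -> : S f (fun k => evalZ (k%:R * e m k + sh (e m) k - e m k) c) m.+2
   = P - S f ev m.+2.
  rewrite S_opp S_add; apply: S_eq => k _.
  by rewrite evalZ_B evalZ_D evalZ_M evalZ_nat evalZ_sh.
ring.
Qed.
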